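(* Let $k\geq1$, $n\geq2k$, let $\mathcal{S},\mathcal{T}$ be antichains in $\mathcal{F}_{2k}^{[1,n]}$ with $\mathcal{T}\prec_p\mathcal{S}$, and let $j\geq1$. For each $i\geq 1$ set $$D_i:=\Big(B\big(\mathcal{S}([i,i+1]),i+2\big)\setminus B\big(\mathcal{T}([i,i+1]),i+2\big)\Big)*\overline{[i,i+1]},$$ and for $1\leq\ell\leq k$ set $$\Gamma_{j,\ell}:=B\big(\mathcal{S}([j+1,j+2\ell]),j+2\ell+1\big)\setminus B\big(\mathcal{T}([j,j+2\ell-1]),j+2\ell+1\big).$$ If $D_{j+1}$ is not the void complex, then $$D_j\cap D_{j+1}=\bigcup_{\ell=1}^{k}\Big(\Gamma_{j,\ell}*\overline{[j+1,j+2\ell-1]}\Big).$$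
   Context: Notation: $[m,n]=\{m,\dots,n\}$; $d$-subsets of $[n]$ are identified with increasing vectors; $G\leq_p F$ means componentwise $\leq$ and $G\prec_p F$ means $G\leq_p F-\mathbf{1}_d$ ($\mathbf{1}_d$ the all-ones vector). For $r\geq1$, $\mathcal{F}_{2r}^{[m,n]}$ is the set of sets $\{i_1,i_1+1,\dots,i_r,i_r+1\}$ with $m\leq i_1$, $i_r\leq n-1$, $i_j\leq i_{j+1}-2$, ordered by $\leq_p$; $\mathcal{F}_0^{[m,n]}=\{\emptyset\}$. For antichains, $\mathcal{T}\prec_p\mathcal{S}$ means every $G\in\mathcal{T}$ satisfies $G\prec_p F$ for some $F\in\mathcal{S}$. $\mathcal{F}_{2r}(\mathcal{S})$ is the order ideal generated by $\mathcal{S}$. For $1\leq\ell\leq k$ and $J=[j,j+2\ell-1]$, $\mathcal{S}(J)\subseteq\mathcal{F}_{2(k-\ell)}^{[1,n]}$ is the set of maximal elements of $\{H\in\mathcal{F}_{2(k-\ell)}^{[1,n]}: H\subseteq[j+2\ell,n],\ J\cup H\in\mathcal{F}(\mathcal{S})\}$. $B(\mathcal{S}(J),m)$ is the pure simplicial complex whose facets are the sets of $\mathcal{F}_{2(k-\ell)}(\mathcal{S}(J))\cap\mathcal{F}_{2(k-\ell)}^{[m,n]}$. For pure complexes $X,Y$, $X\setminus Y$ is the complex generated by the facets of $X$ that are not facets of $Y$. $\overline{V}$ is the full simplex on $V$ ($\overline{\emptyset}=\{\emptyset\}$), $*$ is the join (the join with the void complex, which has no faces, is void). *)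

(* Defs.v *)
From HB Require Import structures.
From mathcomp Require Import all_boot all_order.
From mathcomp Require Import finmap.
Set Implicit Arguments. Unset Strict Implicit. Unset Printing Implicit Defensive.
Local Open Scope fset_scope.

Definition interval (a b : nat) : {fset nat} := [fset x | x in iota a (b.+1 - a)].

Definition vecof (G : {fset nat}) : seq nat := sort leq (enum_fset G).

Definition lep (G F : {fset nat}) : Prop :=
  #|` G| = #|` F| /\ forall i, i < #|` G| -> nth 0 (vecof G) i <= nth 0 (vecof F) i.

(* G <_p F : G <=_p F - 1_d, i.e. componentwise G_i <= F_i - 1 (over Z) *)
Definition ltp (G F : {fset nat}) : Prop :=
  #|` G| = #|` F| /\ forall i, i < #|` G| -> (nth 0 (vecof G) i).+1 <= nth 0 (vecof F) i.

Definition pairset (s : seq nat) : {fset nat} :=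
  [fset x | x in flatten [seq [:: i; i.+1] | i <- s]].

(* Fam2 r m n H  <->  H \in F_{2r}^{[m,n]}  (r = number of pairs) *)
Definition Fam2 (r m n : nat) (H : {fset nat}) : Prop :=
  exists s : seq nat, size s = r /\ sorted (fun a b => a.+2 <= b) s /\
    all (fun i => (m <= i) && (i.+1 <= n)) s /\ H = pairset s.

Definition antichain (k n : nat) (S : {fset {fset nat}}) : Prop :=
  (forall F, F \in S -> Fam2 k 1 n F) /\
  (forall F G, F \in S -> G \in S -> lep F G -> F = G).

Definition precp (T S : {fset {fset nat}}) : Prop :=
  forall G, G \in T -> exists2 F, F \in S & ltp G F.

Definition ideal (r n : nat) (P : {fset nat} -> Prop) (G : {fset nat}) : Prop :=
  Fam2 r 1 n G /\ exists F, P F /\ lep G F.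

(* S(J) for J = [j, j+2l-1] *)
Definition SJ (k n : nat) (S : {fset {fset nat}}) (j l : nat) (H : {fset nat}) : Prop :=
  let Q := fun H => Fam2 (k - l) 1 n H /\ H `<=` interval (j + 2 * l) n /\
                    ideal k n (fun F => F \in S) (interval j (j + 2 * l - 1) `|` H) in
  Q H /\ forall H', Q H' -> lep H H' -> H' = H.

Definition complex := {fset nat} -> Prop.

Definition gen (P : {fset nat} -> Prop) : complex :=
  fun s => exists F, P F /\ s `<=` F.

(* facets of B(P, m), P \subseteq F_{2(k-l)}^{[1,n]} *)
Definition Bfacets (k l n : nat) (P : {fset nat} -> Prop) (m : nat) (H : {fset nat}) : Prop :=
  ideal (k - l) n P H /\ Fam2 (k - l) m n H.

(* X \ Y for pure complexes given by their facets *)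
Definition cdiff (fX fY : {fset nat} -> Prop) : complex :=
  gen (fun F => fX F /\ ~ fY F).

Definition full (V : {fset nat}) : complex := fun s => s `<=` V.

Definition join (X Y : complex) : complex :=
  fun s => exists a b, X a /\ Y b /\ s = a `|` b.

Definition cap (X Y : complex) : complex := fun s => X s /\ Y s.

Definition D (k n : nat) (S T : {fset {fset nat}}) (i : nat) : complex :=
  join (cdiff (Bfacets k 1 n (SJ k n S i 1) (i + 2))
              (Bfacets k 1 n (SJ k n T i 1) (i + 2)))
       (full (interval i (i + 1))).

Definition Gamma (k n : nat) (S T : {fset {fset nat}}) (j l : nat) : complex :=
  cdiff (Bfacets k l n (SJ k n S (j + 1) l) (j + 2 * l + 1))
        (Bfacets k l n (SJ k n T j l) (j + 2 * l + 1)).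

(* Main.v *)
Require Import Defs.
From mathcomp Require Import all_boot all_order.
From mathcomp Require Import finmap.
From mathcomp Require Import zify.
From Stdlib Require Import Classical.
Set Implicit Arguments. Unset Strict Implicit. Unset Printing Implicit Defensive.
Local Open Scope fset_scope.

Fixpoint flat (s : seq nat) := if s is x :: s' then x :: x.+1 :: flat s' else [::].
Lemma flatE s : flat s = flatten [seq [:: i; i.+1] | i <- s].
Proof. by elim: s => //= x s ->. Qed.
Definition R2 := fun a b : nat => a.+2 <= b.
Definition gs (s : seq nat) := sorted R2 s.

Lemma flat_cons x s : flat (x :: s) = x :: x.+1 :: flat s.
Proof. by []. Qed.
Lemma flat_cat s t : flat (s ++ t) = flat s ++ flat t.
Proof. by elim: s => //= x s ->. Qed.
Lemma size_flat s : size (flat s) = 2 * size s.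
Proof. elim: s => // x s IH. rewrite /= IH. lia. Qed.

Lemma mem_pairset s x : (x \in pairset s) = (x \in flat s).
Proof. by rewrite /pairset in_fset flatE. Qed.
Lemma mem_flat s x : (x \in flat s) = has (fun i => (x == i) || (x == i.+1)) s.
Proof. elim: s => // i s IH. by rewrite /= !inE IH /= orbA. Qed.
Lemma mem_interval a b x : (x \in interval a b) = (a <= x <= b).
Proof. rewrite /interval in_fset /= mem_iota. case: (leqP a x) => //= h. lia. Qed.
Lemma vecof_mem G x : (x \in vecof G) = (x \in G).
Proof. by rewrite /vecof mem_sort. Qed.

Lemma R2_trans : transitive R2.
Proof. rewrite /R2 => b a c h1 h2; lia. Qed.

Lemma path_flat s y : path R2 y s -> path ltn y.+1 (flat s).
Proof.
elim: s y => //= x s IH y /andP [h1 h2].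
apply/and3P; split; [rewrite /R2 in h1; lia | by [] | exact: IH].
Qed.

Lemma flat_sorted s : gs s -> sorted ltn (flat s).
Proof.
case: s => //= x s h. apply/andP; split => //. exact: path_flat.
Qed.

Lemma vecof_pairset s : gs s -> vecof (pairset s) = flat s.
Proof.
move=> hs. have hl := flat_sorted hs. rewrite ltn_sorted_uniq_leq in hl.
case/andP: hl => hu hso.
apply: (sorted_eq leq_trans anti_leq) => //.
  by apply: sort_sorted; exact: leq_total.
rewrite /vecof perm_sort. apply: uniq_perm => //; first exact: fset_uniq.
move=> x. by rewrite -mem_pairset.
Qed.

Lemma card_vecof G : #|` G| = size (vecof G).
Proof. by rewrite /vecof size_sort. Qed.

Lemma all2_nth (r : rel nat) x y :
  (size x = size y /\ forall i, i < size x -> r (nth 0 x i) (nth 0 y i)) <-> all2 r x y.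
Proof.
elim: x y => [|a x IH] [|b y] //=; split => //.
- by case.
- by case.
- case=> [[hs] h]. apply/andP; split; first by apply: (h 0).
  apply/IH; split => // i hi. by apply: (h i.+1).
- case/andP=> h1 /IH [h2 h3]; split; first by rewrite h2.
  by case => // i hi; apply: h3.
Qed.

Lemma all2_flat (r : rel nat) u w :
  (forall a b, r a.+1 b.+1 = r a b) ->
  all2 r (flat u) (flat w) = all2 r u w.
Proof.
move=> hr. elim: u w => [|a u IH] [|b w] //=.
by rewrite /= hr IH andbA andbb.
Qed.

Lemma lep_pairset u w : gs u -> gs w ->
  lep (pairset u) (pairset w) <-> all2 leq u w.
Proof.
move=> hu hw. rewrite /lep !card_vecof !vecof_pairset //.
rewrite -(all2_flat (r := leq)) //. exact: all2_nth.
Qed.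

Lemma ltp_pairset u w : gs u -> gs w ->
  ltp (pairset u) (pairset w) <-> all2 (fun a b => a.+1 <= b) u w.
Proof.
move=> hu hw. rewrite /ltp !card_vecof !vecof_pairset //.
rewrite -(all2_flat (r := (fun a b => a.+1 <= b))) //. exact: (all2_nth (fun a b => a.+1 <= b)).
Qed.

Lemma lep_trans A B C : lep A B -> lep B C -> lep A C.
Proof.
case=> h1 h2 [h3 h4]; split; first by rewrite h1.
move=> i hi. apply: leq_trans (h2 i hi) _. apply: h4. by rewrite -h1.
Qed.

Lemma lep_refl A : lep A A.
Proof. by split. Qed.

Fixpoint ps (j l : nat) : seq nat := if l is l'.+1 then j :: ps j.+2 l' else [::].

Lemma size_ps j l : size (ps j l) = l.
Proof. by elim: l j => //= l IH j; rewrite IH. Qed.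

Lemma ps_lb j l : all (fun x => j <= x) (ps j l).
Proof.
elim: l j => //= l IH j. rewrite leqnn /=. apply: sub_all (IH j.+2) => x /=; lia.
Qed.

Lemma ps_ub j l : all (fun x => x.+2 <= j + 2 * l) (ps j l).
Proof.
elim: l j => //= l IH j. apply/andP; split; first lia.
apply: sub_all (IH j.+2) => x /=; lia.
Qed.

Lemma mem_flat_ps j l x : (x \in flat (ps j l)) = (j <= x < j + 2 * l).
Proof.
elim: l j => [|l IH] j /=; first by rewrite in_nil; lia.
rewrite !inE IH. case: (eqVneq x j) => [->|h1] /=; first lia.
case: (eqVneq x j.+1) => [->|h2] /=; first lia. lia.
Qed.

Lemma map_ps j l : map S (ps j l) = ps j.+1 l.
Proof. by elim: l j => //= l IH j; rewrite IH. Qed.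

Lemma all2_refl (s : seq nat) : all2 leq s s.
Proof. by elim: s => //= x s ->; rewrite leqnn. Qed.

Lemma all2_cat (r : rel nat) s1 s2 t1 t2 : size s1 = size t1 ->
  all2 r (s1 ++ s2) (t1 ++ t2) = all2 r s1 t1 && all2 r s2 t2.
Proof.
elim: s1 t1 => [|a s1 IH] [|b t1] //= [h]. by rewrite IH // andbA.
Qed.

Lemma ps_le j l : all2 leq (ps j l) (ps j.+1 l).
Proof. by elim: l j => //= l IH j; rewrite leqnSn IH. Qed.

Lemma gsE x s : gs (x :: s) = all (R2 x) s && gs s.
Proof. by rewrite /gs /= (path_sortedE R2_trans). Qed.

Lemma gs_cat_ps j l H : gs H -> all (fun x => j + 2 * l <= x) H -> gs (ps j l ++ H).
Proof.
elim: l j => [|l IH] j hH hall; first by [].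
change (gs (j :: (ps j.+2 l ++ H))).
rewrite gsE IH //; last by apply: sub_all hall => x /=; lia.
rewrite andbT all_cat. apply/andP; split.
  by apply: sub_all (ps_lb j.+2 l) => x /=; rewrite /R2.
by apply: sub_all hall => x /=; rewrite /R2; lia.
Qed.

Lemma pairset_cat u v : pairset (u ++ v) = pairset u `|` pairset v.
Proof. apply/fsetP => x. by rewrite in_fsetU !mem_pairset flat_cat mem_cat. Qed.

Lemma interval_ps j l : 1 <= l -> interval j (j + 2 * l - 1) = pairset (ps j l).
Proof.
move=> hl. apply/fsetP => x. rewrite mem_interval mem_pairset mem_flat_ps. lia.
Qed.

Lemma all2_sumn x y : all2 leq x y -> sumn x <= sumn y /\ (sumn x = sumn y -> x = y).
Proof.
elim: x y => [|a x IH] [|b y] //= /andP [h1 /IH [h2 h3]]; split; first lia.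
move=> he. have e1 : a = b by lia. subst. congr (_ :: _). apply: h3. lia.
Qed.

Lemma vecof_inj A B : vecof A = vecof B -> A = B.
Proof. move=> h; apply/fsetP => x. by rewrite -!vecof_mem h. Qed.

Lemma lep_all2 A B : lep A B -> all2 leq (vecof A) (vecof B).
Proof. case=> h1 h2. apply/all2_nth; split; by rewrite -!card_vecof. Qed.

Lemma sum_lep_strict A B : lep A B -> A <> B -> sumn (vecof A) < sumn (vecof B).
Proof.
move=> /lep_all2 /all2_sumn [h1 h2] hne. rewrite ltn_neqAle h1 andbT.
apply/eqP => /h2 /vecof_inj. exact: hne.
Qed.

Lemma exists_max (Q : {fset nat} -> Prop) N H : Q H ->
  (forall G, Q G -> sumn (vecof G) <= N) ->
  exists G, [/\ Q G, lep H G & forall G', Q G' -> lep G G' -> G' = G].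
Proof.
move=> hQ hN.
suff: forall d H, N - sumn (vecof H) <= d -> Q H ->
  exists G, [/\ Q G, lep H G & forall G', Q G' -> lep G G' -> G' = G].
  by move=> /(_ _ H (leqnn _) hQ).
elim=> [|d IH] H0 hd hQ0.
- exists H0; split; [exact: hQ0 | exact: (lep_refl H0) | ].
  move=> G' hG' hl. apply: NNPP => hne.
  have := sum_lep_strict hl (nesym hne). have := hN _ hG'. lia.
- case: (classic (exists G', [/\ Q G', lep H0 G' & G' <> H0])).
  + case=> G' [hG' hl hne]. have hs := sum_lep_strict hl (nesym hne).
    have hb := hN _ hG'.
    case: (IH G') => //; first lia.
    move=> G [h1 h2 h3]. exists G; split => //. exact: lep_trans hl h2.
  + move=> hno. exists H0; split; [exact: hQ0 | exact: (lep_refl H0) | ].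
    move=> G' hG' hl. apply: NNPP => hne. apply: hno. by exists G'.
Qed.

Definition P (X : {fset {fset nat}}) (v : seq nat) := exists2 F, F \in X & lep (pairset v) F.

Lemma all2_size (r : rel nat) v w : all2 r v w -> size v = size w.
Proof. by move/all2_nth => []. Qed.

Lemma all2_le_all n v w : all2 leq v w -> all (fun i => i.+1 <= n) w -> all (fun i => i.+1 <= n) v.
Proof.
elim: v w => [|a v IH] [|b w] //= /andP [h1 h2] /andP [h3 h4].
rewrite (IH w) // andbT. lia.
Qed.

Lemma P_bound k n X v : (forall F, F \in X -> Fam2 k 1 n F) -> gs v -> P X v ->
  size v = k /\ all (fun i => i.+1 <= n) v.
Proof.
move=> hX hv [F hF hl]. case: (hX F hF) => w [hw [hgw [haw ew]]]. subst F.
move/(lep_pairset hv hgw): hl => hall. split; first by rewrite (all2_size hall).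
apply: all2_le_all hall _. by apply: sub_all haw => x /andP [].
Qed.

Lemma P_mono X u v : gs u -> gs v -> all2 leq u v -> P X v -> P X u.
Proof.
move=> hu hv hl [F hF hF']. exists F => //. apply: lep_trans hF'.
by apply/lep_pairset.
Qed.

Lemma sumn_le n s : all (fun x => x <= n) s -> sumn s <= size s * n.
Proof. elim: s => //= x s IH /andP [h1 /IH h2]. rewrite mulSn. lia. Qed.

Lemma mem_pairsetP s x : reflect (exists2 i, i \in s & x = i \/ x = i.+1) (x \in pairset s).
Proof.
rewrite mem_pairset mem_flat. apply: (iffP hasP) => [[i hi /orP [/eqP|/eqP]]|[i hi [|]]] ->;
  exists i => //; rewrite ?eqxx ?orbT //; by [left|right].
Qed.

Lemma Fam2_intro r m n s : size s = r -> gs s ->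
  all (fun i => (m <= i) && (i.+1 <= n)) s -> Fam2 r m n (pairset s).
Proof. move=> h1 h2 h3. by exists s. Qed.

Lemma BSJ k l n j m (X : {fset {fset nat}}) H :
  1 <= l <= k -> 1 <= j -> j + 2 * l <= m -> (forall F, F \in X -> Fam2 k 1 n F) ->
  Bfacets k l n (SJ k n X j l) m H <->
  exists h, [/\ H = pairset h, size h = k - l, gs h,
    all (fun i => (m <= i) && (i.+1 <= n)) h & P X (ps j l ++ h)].
Proof.
move=> /andP [hl1 hl2] hj hm hX. split.
- case=> [[_ [F' [[[hF'fam [hF'sub hF'id]] _] hlep]]] [h [hs [hg [ha eH]]]]].
  subst H. exists h; split => //.
  case: hF'id => _ [F [hF hlF]]. exists F => //.
  case: hF'fam => f [hfs [hfg [hfa ef]]]. subst F'.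
  apply: lep_trans hlF. rewrite interval_ps // -pairset_cat.
  have hah : all (fun x => j + 2 * l <= x) h.
    by apply: sub_all ha => x /andP [h1 _]; lia.
  have haf : all (fun x => j + 2 * l <= x) f.
    apply/allP => x hx. have : x \in pairset f by apply/mem_pairsetP; exists x => //; left.
    move/(fsubsetP hF'sub). by rewrite mem_interval => /andP [].
  apply/lep_pairset; try exact: gs_cat_ps.
  rewrite all2_cat // all2_refl /=. by apply/lep_pairset.
- case=> h [eH hs hg ha hP]. subst H.
  have hah : all (fun x => j + 2 * l <= x) h.
    by apply: sub_all ha => x /andP [h1 _]; lia.
  have hgc : gs (ps j l ++ h) by exact: gs_cat_ps.
  have [_ hb] := P_bound hX hgc hP.
  split; last by apply: Fam2_intro.
  split.
    apply: Fam2_intro => //. apply: sub_all ha => x /andP [h1 h2]. apply/andP; split => //; lia.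
  set Q := fun H => Fam2 (k - l) 1 n H /\ H `<=` interval (j + 2 * l) n /\
                    ideal k n (fun F => F \in X) (interval j (j + 2 * l - 1) `|` H).
  have hQ : Q (pairset h).
    split.
      apply: Fam2_intro => //. apply: sub_all ha => x /andP [h1 h2]. apply/andP; split => //; lia.
    split.
      apply/fsubsetP => x /mem_pairsetP [i hi ex]. rewrite mem_interval.
      move/allP: ha => /(_ i hi) /andP [h1 h2]. case: ex => ->; lia.
    rewrite interval_ps // -pairset_cat. split; last first.
      case: hP => F hF hlF. by exists F.
    apply: Fam2_intro => //.
      by rewrite size_cat size_ps hs; lia.
    rewrite all_cat. apply/andP; split.
      apply/allP => x hx. move/allP: hb => /(_ x). rewrite mem_cat hx => /(_ isT) ->.
      move/allP: (ps_lb j l) => /(_ x hx). rewrite andbT. lia.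
    apply: sub_all ha => x /andP [h1 h2]. apply/andP; split => //; lia.
  have hN : forall G, Q G -> sumn (vecof G) <= (2 * (k - l)) * n.
    move=> G [[g [hgs [hgg [hga eG]]]] [hsub _]]. subst G.
    apply: leq_trans (sumn_le (n := n) _) _.
      apply/allP => x. rewrite vecof_mem => hx. move/fsubsetP: hsub => /(_ x hx).
      by rewrite mem_interval => /andP [].
    by rewrite vecof_pairset // size_flat hgs.
  case: (exists_max hQ hN) => G [hQG hlG hmax]. exists G; split => //.
Qed.

Lemma gs_tail x s : gs (x :: s) -> gs s.
Proof. by rewrite gsE => /andP []. Qed.

Lemma gs_map s : gs s -> gs (map S s).
Proof. move=> h. rewrite /gs. apply: (homo_sorted (e := R2)) h => a b; rewrite /R2; lia. Qed.

Lemma all2_all_lb (f : nat -> bool) s t :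
  (forall a b, a <= b -> f a -> f b) -> all2 leq s t -> all f s -> all f t.
Proof.
move=> hf. elim: s t => [|a s IH] [|b t] //= /andP [h1 h2] /andP [h3 h4].
by rewrite (hf a b) // IH.
Qed.

Lemma flat_lb m s x : all (fun i => m <= i) s -> x \in flat s -> m <= x.
Proof.
move=> ha. rewrite mem_flat => /hasP [i hi /orP [/eqP ->|/eqP ->]];
  move/allP: ha => /(_ i hi); lia.
Qed.

Lemma gs_lb q s : gs (q :: s) -> all (fun i => q <= i) (q :: s).
Proof.
rewrite gsE /= leqnn => /andP [h _]. apply: sub_all h => x; rewrite /R2; lia.
Qed.

Fixpoint rs (H : seq nat) : seq nat :=
  match H with
  | [::] => [::]
  | p :: H' => p.+1 :: (if H' is p' :: _ then (if p' == p.+2 then rs H' else H') else [::])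
  end.

Lemma all2_mapS s : all2 leq s (map S s).
Proof. by elim: s => //= x s ->; rewrite leqnSn. Qed.

Lemma rs_ge H : all2 leq H (rs H).
Proof.
elim: H => //= p H' IH. rewrite leqnSn /=.
case: H' IH => //= p' H'' IH. case: eqP => // _. by rewrite /= leqnn all2_refl.
Qed.

Lemma rs_le H : all2 leq (rs H) (map S H).
Proof.
elim: H => //= p H' IH. rewrite leqnn /=.
case: H' IH => //= p' H'' IH. case: eqP => // _. by rewrite /= leqnSn all2_mapS.
Qed.

Lemma rs_cons p H' : rs (p :: H') =
  p.+1 :: (if H' is p' :: _ then (if p' == p.+2 then rs H' else H') else [::]).
Proof. by []. Qed.

Lemma rs_gs H : gs H -> gs (rs H).
Proof.
elim: H => [//|p H' IH] hg. have hg' := gs_tail hg.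
move: hg; rewrite gsE => /andP [hall _].
case: H' IH hg' hall => [|p' H''] IH hg' hall; first by [].
rewrite rs_cons. case/andP: hall => hp _. rewrite /R2 in hp.
case: eqP => [ep|np].
- have := IH hg'. rewrite rs_cons => hr.
  rewrite gsE hr andbT. apply: sub_all (gs_lb hr) => x; rewrite /R2; lia.
- rewrite gsE hg' andbT. apply/allP => x hx.
  move/allP: (gs_lb hg') => /(_ x hx). rewrite /R2.
  move: hx; rewrite inE => /orP [/eqP ->|hx]; first lia.
  move: hg'; rewrite gsE => /andP [/allP /(_ x hx)]; rewrite /R2; lia.
Qed.

Lemma rs_mem p H' x : x \in flat (p :: H') -> x != p -> x \in flat (rs (p :: H')).
Proof.
elim: H' p x => [|p' H'' IH] p x.
- rewrite rs_cons /= !inE => /orP [->//|->//].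
- rewrite rs_cons !flat_cons !inE.
  case/orP => [->//|/orP [->//|hx] _].
  case: (eqVneq p' p.+2) => [ep|np].
  + case: (eqVneq x p') => [ex|nx].
      by rewrite ex ep eqxx !orbT.
    by rewrite (IH p' x hx nx) !orbT.
  + by apply/orP; right; apply/orP; right; rewrite flat_cons !inE.
Qed.

Lemma rs_leA p H' q A' : gs (p :: H') -> gs (q :: A') ->
  all2 leq (p :: H') (q :: A') -> p < q -> all2 leq (rs (p :: H')) (q :: A').
Proof.
elim: H' p q A' => [|p' H'' IH] p q A' hg1 hg2 hle hpq.
- case: A' hle hg2 => [|q' A''] hle hg2; last by move: hle; rewrite /= andbF.
  by rewrite rs_cons /= hpq.
- case: A' hle hg2 => [|q' A''] hle hg2; first by move: hle; rewrite /= andbF.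
  rewrite rs_cons. apply/andP; split => //.
  case/andP: hle => _ hle. case: eqP => [ep|np] //.
  apply: IH => //; [exact: gs_tail hg1 | exact: gs_tail hg2|].
  move: hg2; rewrite gsE => /andP [/andP [h _] _]. rewrite /R2 in h. lia.
Qed.

Lemma rs_sum p H' : sumn (p :: H') < sumn (rs (p :: H')).
Proof.
rewrite rs_cons. rewrite [sumn (_ :: _)]/= [sumn (_.+1 :: _)]/=.
suff : sumn H' <= sumn (if H' is p' :: _ then (if p' == p.+2 then rs H' else H') else [::]) by lia.
case: H' => // p' H''. case: eqP => _ //.
by case: (all2_sumn (rs_ge (p' :: H''))).
Qed.

Fixpoint sh (H A : seq nat) : seq nat :=
  match H, A with
  | p :: H', q :: A' => if p == q then p :: sh H' A' else rs H
  | _, _ => H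
  end.

Lemma sh_cons p H' q A' : sh (p :: H') (q :: A') = if p == q then p :: sh H' A' else rs (p :: H').
Proof. by []. Qed.

Lemma sh_ge H A : all2 leq H (sh H A).
Proof.
elim: H A => [|p H' IH] [|q A'] //; try exact: all2_refl.
rewrite sh_cons. case: eqP => _; last exact: rs_ge.
by rewrite [all2 _ _ _]/= leqnn IH.
Qed.

Lemma sh_le H A : all2 leq (sh H A) (map S H).
Proof.
elim: H A => [|p H' IH] [|q A'] //; try exact: all2_mapS.
rewrite sh_cons. case: eqP => _; last exact: rs_le.
by rewrite [all2 _ _ _]/= leqnSn IH.
Qed.

Lemma sh_gs H A : gs H -> gs (sh H A).
Proof.
elim: H A => [|p H' IH] [|q A'] hg //.
rewrite sh_cons. case: eqP => _; last exact: rs_gs.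
move: hg; rewrite !gsE => /andP [ha hg]. rewrite IH // andbT.
apply: all2_all_lb ha; last exact: sh_ge. rewrite /R2 => a b; lia.
Qed.

Lemma sh_leA H A : gs H -> gs A -> all2 leq H A -> all2 leq (sh H A) A.
Proof.
elim: H A => [|p H' IH] [|q A'] hg1 hg2 hle //.
rewrite sh_cons. case: eqP => [ep|np].
- subst q. case/andP: hle => _ hle. rewrite [all2 _ _ _]/= leqnn IH //.
  exact: gs_tail hg1. exact: gs_tail hg2.
- apply: rs_leA => //. case/andP: hle => h _. rewrite ltn_neqAle h andbT. exact/eqP.
Qed.

Lemma sh_sum H A : all2 leq H A -> H <> A -> sumn H < sumn (sh H A).
Proof.
elim: H A => [|p H' IH] [|q A'] hle hne //.
rewrite sh_cons. case: eqP => [ep|np]; last exact: rs_sum.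
subst q. case/andP: hle => _ hle. rewrite [sumn (p :: sh _ _)]/= [sumn (p :: H')]/=.
have : sumn H' < sumn (sh H' A') by apply: IH => // e; apply: hne; rewrite e.
lia.
Qed.

Lemma sh_mem H A x : gs H -> gs A -> all2 leq H A ->
  x \in flat H -> x \in flat A -> x \in flat (sh H A).
Proof.
elim: H A => [|p H' IH] [|q A'] hg1 hg2 hle //.
rewrite sh_cons. case: eqP => [ep|np].
- subst q. case/andP: hle => _ hle.
  rewrite !flat_cons !inE.
  case/orP => [->//|/orP [->|h1]]; first by rewrite orbT.
  case/orP => [/eqP ex|/orP [/eqP ex|h2]].
  + by rewrite ex eqxx.
  + by rewrite ex eqxx orbT.
  + rewrite (IH A') ?orbT //. exact: gs_tail hg1. exact: gs_tail hg2.
- move=> h1 h2. apply: rs_mem => //.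
  have hq := flat_lb (gs_lb hg2) h2. case/andP: hle => hpq _.
  apply/eqP => ex. subst x. apply: np. lia.
Qed.

Fixpoint minl (A B : seq nat) : seq nat :=
  match A, B with
  | a :: A', b :: B' => (if a <= b then a else b) :: minl A' B'
  | _, _ => [::]
  end.

Lemma minl_lb m A B : all (fun x => m <= x) A -> all (fun x => m <= x) B ->
  all (fun x => m <= x) (minl A B).
Proof.
elim: A B => [|a A IH] [|b B] //= /andP [h1 h2] /andP [h3 h4].
by rewrite IH // andbT; case: ifP.
Qed.

Lemma minl_gs A B : gs A -> gs B -> gs (minl A B).
Proof.
elim: A B => [|a A IH] [|b B] // hA hB.
rewrite [minl _ _]/= gsE. move: hA hB; rewrite !gsE => /andP [ha hA] /andP [hb hB].
rewrite IH // andbT.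
apply: (@minl_lb (if a <= b then a else b).+2).
  apply: sub_all ha => x; rewrite /R2 => h; case: (leqP a b) => ?; lia.
apply: sub_all hb => x; rewrite /R2 => h; case: (leqP a b) => ?; lia.
Qed.

Lemma minl_le1 A B : size A = size B -> all2 leq (minl A B) A.
Proof. elim: A B => [|a A IH] [|b B] //= [h]. rewrite IH // andbT. case: (leqP a b) => ?; lia. Qed.

Lemma minl_le2 A B : size A = size B -> all2 leq (minl A B) B.
Proof. elim: A B => [|a A IH] [|b B] //= [h]. rewrite IH // andbT. case: (leqP a b) => ?; lia. Qed.

Lemma minl_size A B : size A = size B -> size (minl A B) = size A.
Proof. elim: A B => [|a A IH] [|b B] //= [h]. by rewrite IH. Qed.

Lemma minl_lt1 A B x : size A = size B -> x \in flat A -> all (fun y => x < y) B ->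
  x \in flat (minl A B).
Proof.
elim: A B => [|a A IH] [|b B] // [hs].
rewrite [minl _ _]/= !flat_cons !inE => hx /andP [hb hB].
case/orP: hx => [/eqP ex|/orP [/eqP ex|hx]].
+ have -> : (a <= b) = true by apply/idP; lia. by rewrite ex eqxx.
+ have -> : (a <= b) = true by apply/idP; lia. by rewrite ex eqxx orbT.
+ by rewrite IH ?orbT.
Qed.

Lemma minl_lt2 A B x : size A = size B -> x \in flat B -> all (fun y => x < y) A ->
  x \in flat (minl A B).
Proof.
elim: A B => [|a A IH] [|b B] // [hs].
rewrite [minl _ _]/= !flat_cons !inE => hx /andP [hb hB].
case/orP: hx => [/eqP ex|/orP [/eqP ex|hx]].
+ have -> : (a <= b) = false by apply/negbTE; rewrite -ltnNge; lia. by rewrite ex eqxx.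
+ have -> : (a <= b) = false by apply/negbTE; rewrite -ltnNge; lia. by rewrite ex eqxx orbT.
+ by rewrite IH ?orbT.
Qed.

Lemma minl_mem A B x : size A = size B -> gs A -> gs B ->
  x \in flat A -> x \in flat B -> x \in flat (minl A B).
Proof.
elim: A B => [|a A IH] [|b B] // [hs] hA hB.
have hlA := gs_lb hA. have hlB := gs_lb hB.
move: hA hB; rewrite !gsE => /andP [ha hA] /andP [hb hB].
rewrite [minl _ _]/= !flat_cons !inE.
case/orP => [/eqP ex|/orP [/eqP ex|hx]]; case/orP => [/eqP ey|/orP [/eqP ey|hy]].
all: try (case: (leqP a b) => hab;
  first [apply/orP; left; apply/eqP; lia | apply/orP; right; apply/orP; left; apply/eqP; lia]).
all: try (rewrite (minl_lt2 hs hy) ?orbT //; apply: sub_all ha => y; rewrite /R2; lia).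
all: try (rewrite (minl_lt1 hs hx) ?orbT //; apply: sub_all hb => y; rewrite /R2; lia).
by rewrite IH ?orbT.
Qed.

Lemma decomp j s : gs (j :: s) -> exists L A,
  [/\ 1 <= L, j :: s = ps j L ++ A & all (fun x => j + 2 * L < x) A].
Proof.
elim: s j => [|p s IH] j hg; first by exists 1, [::].
have hp : j.+2 <= p by move: hg; rewrite gsE => /andP [/andP [h _] _].
case: (eqVneq p j.+2) => [ep|np].
- subst p. case: (IH j.+2 (gs_tail hg)) => L [A [hL e ha]].
  exists L.+1, A. split => //; first by rewrite e.
  apply: sub_all ha => x /=; lia.
- exists 1, (p :: s). split => //. apply/allP => x hx.
  move/allP: (gs_lb (gs_tail hg)) => /(_ x hx). move: hx; rewrite inE => /orP [/eqP ->|hx].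
    move=> _; lia.
  move: (gs_tail hg); rewrite gsE => /andP [/allP /(_ x hx)]; rewrite /R2; lia.
Qed.

Lemma drop_lb m L s : gs s -> all (fun x => m <= x) s ->
  all (fun x => m + 2 * L <= x) (drop L s).
Proof.
elim: L m s => [|L IH] m [|x s] hg ha //=.
- rewrite muln0 addn0. exact: ha.
- apply: sub_all (IH m.+2 s (gs_tail hg) _) => [y /=|]; first lia.
  move: hg; rewrite gsE => /andP [h _]. case/andP: ha => hx _.
  apply: sub_all h => y; rewrite /R2; lia.
Qed.

Lemma ps_take m L s : gs s -> all (fun x => m <= x) s -> L <= size s ->
  all2 leq (ps m L) (take L s).
Proof.
elim: L m s => [|L IH] m [|x s] hg ha hL //=.
case/andP: ha => hx _. rewrite hx IH //; first exact: gs_tail hg.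
move: hg; rewrite gsE => /andP [h _].
apply: sub_all h => y; rewrite /R2; lia.
Qed.

Lemma gs_cat_lt t1 t2 x y : gs (t1 ++ t2) -> x \in flat t1 -> y \in t2 -> x < y.
Proof.
elim: t1 => [|i t1 IH] hg hx hy; first by rewrite in_nil in hx.
move: hx; rewrite flat_cons !inE => hx.
have hg' : gs (t1 ++ t2) := gs_tail hg.
move: hg; rewrite cat_cons gsE => /andP [/allP h _].
have := h y; rewrite mem_cat hy orbT => /(_ isT); rewrite /R2 => hiy.
case/orP: hx => [/eqP ->|/orP [/eqP ->|hx]]; first lia; first lia.
exact: IH.
Qed.

Lemma core (PS PT : seq nat -> Prop) (j L : nat) (A : seq nat) (Xp : pred nat) :
  (forall u v, gs u -> gs v -> all2 leq u v -> PS v -> PS u) ->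
  (forall v, gs v -> PT v -> PS (map S v)) ->
  gs A -> all (fun x => j + 2 * L < x) A -> ~ PT (ps j L ++ A) ->
  forall H, gs H -> all2 leq H A -> all (fun x => j + 2 * L < x) H ->
  (forall x, x \in flat A -> Xp x -> x \in flat H) -> PS (ps j.+1 L ++ H) ->
  exists H', [/\ gs H', size H' = size A, all (fun x => j + 2 * L < x) H',
     (forall x, x \in flat A -> Xp x -> x \in flat H') &
     (PS (ps j.+1 L ++ H') /\ ~ PT (ps j L ++ H'))].
Proof.
move=> hmono hstep hgA haA hnA.
suff hs : forall d H, sumn A - sumn H <= d -> gs H -> all2 leq H A ->
  all (fun x => j + 2 * L < x) H ->
  (forall x, x \in flat A -> Xp x -> x \in flat H) -> PS (ps j.+1 L ++ H) ->
  exists H', [/\ gs H', size H' = size A, all (fun x => j + 2 * L < x) H',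
     (forall x, x \in flat A -> Xp x -> x \in flat H') &
     (PS (ps j.+1 L ++ H') /\ ~ PT (ps j L ++ H'))].
  by move=> H; apply: hs (leqnn _).
elim=> [|d IH] H hd hgH hle haH hX hPS;
  (case: (classic (PT (ps j L ++ H))) => hPT;
   last by exists H; split => //; exact: all2_size hle).
all: have hne : H <> A by move=> e; apply: hnA; rewrite -e.
all: have hsum := sh_sum hle hne.
all: have hleA := sh_leA hgH hgA hle.
all: have [hsA _] := all2_sumn hleA.
- lia.
- apply: (IH (sh H A)).
  + lia.
  + exact: sh_gs.
  + exact: hleA.
  + apply: (all2_all_lb _ (sh_ge H A) haH); move=> a b; lia.
  + move=> x hx hxp. apply: sh_mem => //. exact: hX.
  + have hgc : gs (ps j L ++ H).
      apply: gs_cat_ps => //. apply: sub_all haH => x; lia.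
    have := hstep _ hgc hPT. rewrite map_cat map_ps => hP.
    apply: hmono hP.
    * apply: gs_cat_ps; first exact: sh_gs.
      apply: (all2_all_lb _ (sh_ge H A) haH); move=> a b; lia.
    * apply: gs_cat_ps; first exact: gs_map.
      rewrite all_map. apply: sub_all haH => x /=; lia.
    * rewrite all2_cat ?size_ps // all2_refl /=. exact: sh_le.
Qed.

Lemma flat_inj u v : flat u = flat v -> u = v.
Proof.
elim: u v => [|a u IH] [|b v] //= [e _ h]. by rewrite e (IH v).
Qed.

Lemma pairset_inj u v : gs u -> gs v -> pairset u = pairset v -> u = v.
Proof.
move=> hu hv e. apply: flat_inj. by rewrite -(vecof_pairset hu) -(vecof_pairset hv) e.
Qed.

Lemma all2_succ v g f : all2 leq v g -> all2 (fun a b => a.+1 <= b) g f -> all2 leq (map succn v) f.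
Proof.
elim: v g f => [|a v IH] [|b g] [|c f] //= /andP [h1 h2] /andP [h3 h4].
rewrite (IH g) // andbT. lia.
Qed.

Lemma step_lemma k n (X Y : {fset {fset nat}}) :
  (forall F, F \in X -> Fam2 k 1 n F) -> (forall F, F \in Y -> Fam2 k 1 n F) ->
  precp Y X -> forall v, gs v -> P Y v -> P X (map succn v).
Proof.
move=> hX hY hp v hv [G hG hl]. case: (hp G hG) => F hF hlt.
case: (hY G hG) => g [_ [hgg [_ eG]]]. case: (hX F hF) => f [_ [hgf [_ eF]]].
subst G F. exists (pairset f) => //.
apply/lep_pairset => //; first exact: gs_map.
move/(lep_pairset hv hgg): hl => hl. move/(ltp_pairset hgg hgf): hlt => hlt.
exact: all2_succ hl hlt.
Qed.

Lemma D_char k n (X Y : {fset {fset nat}}) i s : 1 <= k -> 1 <= i ->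
  (forall F, F \in X -> Fam2 k 1 n F) -> (forall F, F \in Y -> Fam2 k 1 n F) ->
  D k n X Y i s <-> exists h, [/\ size h = k - 1, gs h,
     all (fun x => (i + 2 <= x) && (x.+1 <= n)) h,
     (P X (i :: h) /\ ~ P Y (i :: h)) & s `<=` pairset (i :: h)].
Proof.
move=> hk hi hX hY.
have hl : 1 <= 1 <= k by rewrite leqnn hk.
have hm : i + 2 * 1 <= i + 2 by rewrite muln1.
have BX := fun H => BSJ H hl hi hm hX.
have BY := fun H => BSJ H hl hi hm hY.
split.
- case=> s1 [s2 [[F [[hFX hFY] hsub1]] [hsub2 ->]]].
  case/BX: hFX => h [eF hs hg ha hP]. subst F.
  exists h; split => //.
    split => // hPY. apply: hFY. apply/BY. by exists h; split.
  apply/fsubsetP => x. rewrite in_fsetU => /orP [hx|hx].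
    move/fsubsetP: hsub1 => /(_ x hx). rewrite !mem_pairset flat_cons !inE => ->. by rewrite !orbT.
  move/fsubsetP: hsub2 => /(_ x hx). rewrite mem_interval mem_pairset flat_cons !inE => h2.
  apply/orP. case: (eqVneq x i) => [->|nx]; first by left. right. apply/orP; left. apply/eqP; lia.
- case=> h [hs hg ha [hP hnP] hsub].
  exists (s `&` pairset h), (s `\` pairset h). split; [|split].
  + exists (pairset h). split; last exact: fsubsetIr.
    split; first by apply/BX; exists h; split.
    case/BY => h' [e hs' hg' ha' hP']. have eh := pairset_inj hg hg' e. subst h'. exact: hnP hP'.
  + apply/fsubsetP => x. rewrite in_fsetD => /andP [hx1 hx2].
    move/fsubsetP: hsub => /(_ x hx2). rewrite mem_interval mem_pairset flat_cons !inE.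
    rewrite -mem_pairset (negbTE hx1) !orbF => /orP [/eqP ->|/eqP ->]; lia.
  + apply/fsetP => x. rewrite in_fsetU in_fsetI in_fsetD.
    by case: (x \in s); case: (x \in pairset h).
Qed.

Lemma G_char k n (X Y : {fset {fset nat}}) j l s : 1 <= l <= k -> 1 <= j ->
  (forall F, F \in X -> Fam2 k 1 n F) -> (forall F, F \in Y -> Fam2 k 1 n F) ->
  join (Gamma k n X Y j l) (full (interval (j + 1) (j + 2 * l - 1))) s <->
  exists h, [/\ size h = k - l, gs h, all (fun x => (j + 2 * l + 1 <= x) && (x.+1 <= n)) h,
     (P X (ps j.+1 l ++ h) /\ ~ P Y (ps j l ++ h)) &
     s `<=` pairset h `|` interval (j + 1) (j + 2 * l - 1)].
Proof.
move=> hl hj hX hY.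
have hj1 : 1 <= j + 1 by lia.
have hm1 : j + 1 + 2 * l <= j + 2 * l + 1 by lia.
have hm2 : j + 2 * l <= j + 2 * l + 1 by lia.
have BX := fun H => BSJ H hl hj1 hm1 hX.
have BY := fun H => BSJ H hl hj hm2 hY.
have e1 : ps (j + 1) l = ps j.+1 l by rewrite addn1.
split.
- case=> s1 [s2 [[F [[hFX hFY] hsub1]] [hsub2 ->]]].
  case/BX: hFX => h [eF hs hg ha hP]. subst F. rewrite e1 in hP.
  exists h; split => //.
    split => // hPY. apply: hFY. apply/BY. by exists h; split.
  apply/fsubsetP => x. rewrite in_fsetU => /orP [hx|hx].
    move/fsubsetP: hsub1 => /(_ x hx). by rewrite in_fsetU => ->.
  move/fsubsetP: hsub2 => /(_ x hx). by rewrite in_fsetU => ->; rewrite orbT.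
- case=> h [hs hg ha [hP hnP] hsub].
  exists (s `&` pairset h), (s `\` pairset h). split; [|split].
  + exists (pairset h). split; last exact: fsubsetIr.
    split; first by apply/BX; exists h; split => //; rewrite e1.
    case/BY => h' [e hs' hg' ha' hP']. have eh := pairset_inj hg hg' e. subst h'. exact: hnP hP'.
  + apply/fsubsetP => x. rewrite in_fsetD => /andP [hx1 hx2].
    move/fsubsetP: hsub => /(_ x hx2). by rewrite in_fsetU (negbTE hx1).
  + apply/fsetP => x. rewrite in_fsetU in_fsetI in_fsetD.
    by case: (x \in s); case: (x \in pairset h).
Qed.

Ltac clr := repeat match goal with
  | H : is_true (fsubset _ _) |- _ => clear H
  | H : is_true (all _ _) |- _ => clear H
  | H : is_true (gs _) |- _ => clear H
  | H : is_true (_ \in _) |- _ => clear H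
  | H : is_true (all2 _ _ _) |- _ => clear H
  end.
Ltac nlia := solve [clr; lia].

Local Close Scope fset_scope.

Theorem lemma3p9 (k n : nat) (S T : {fset {fset nat}}) (j : nat) :
  1 <= k -> 2 * k <= n ->
  antichain k n S -> antichain k n T -> precp T S -> 1 <= j ->
  (exists s, D k n S T (j + 1) s) ->
  forall s, cap (D k n S T j) (D k n S T (j + 1)) s <->
    exists l, (1 <= l <= k) /\
      join (Gamma k n S T j l) (full (interval (j + 1) (j + 2 * l - 1))) s.
Proof.
move=> hk hn [hSF _] [hTF _] hprec hj _ s.
have hstep := step_lemma hSF hTF hprec.
have hj1 : 1 <= j + 1 by nlia.
split.
- case=> hD1 hD2.
  case/(D_char _ hk hj hSF hTF): hD1 => h1 [hs1 hg1 ha1 [hP1 hnP1] hsub1].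
  case/(D_char _ hk hj1 hSF hTF): hD2 => h2 [hs2 hg2 ha2 [hP2 hnP2] hsub2].
  set b := j + 1 :: h2.
  have hgb : gs b.
    rewrite /b gsE hg2 andbT. apply: sub_all ha2 => x /andP [h _]; rewrite /R2; nlia.
  have hga : gs (j :: h1).
    rewrite gsE hg1 andbT. apply: sub_all ha1 => x /andP [h _]; rewrite /R2; nlia.
  case: (decomp hga) => L [A [hL e haA]].
  have hsz : L + size A = k.
    have := congr1 size e. rewrite size_cat size_ps /= hs1. nlia.
  have hgA : gs A.
    move: hga; rewrite e => /cat_sorted2 [_ h]. exact: h.
  have hszb : size b = k by rewrite /= hs2; nlia.
  set B := drop L b.
  have hgB : gs B := drop_sorted L hgb.
  have hszB : size A = size B by rewrite /B size_drop hszb; nlia.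
  have hbl : all (fun x => j + 1 <= x) b := gs_lb hgb.
  have haB : all (fun x => j + 2 * L < x) B.
    apply: sub_all (drop_lb L hgb hbl) => x /=; nlia.
  have hgH0 : gs (minl A B) := minl_gs hgA hgB.
  have haH0 : all (fun x => j + 2 * L < x) (minl A B) := minl_lb haA haB.
  have hXH0 : forall x, x \in flat A -> x \in flat b -> x \in flat (minl A B).
    move=> x hxA hxb. move: hxb; rewrite -(cat_take_drop L b) flat_cat mem_cat => /orP [hxb|hxb].
      apply: minl_lt1 hszB hxA _. apply/allP => y hy.
      apply: (gs_cat_lt (t1 := take L b) (t2 := B)) => //. by rewrite cat_take_drop.
    exact: minl_mem.
  have hPH0 : P S (ps j.+1 L ++ minl A B).
    apply: (P_mono _ _ _ hP2).
    + apply: gs_cat_ps => //; try (apply: sub_all haH0 => x /=; nlia).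
    + exact: hgb.
    + rewrite -/b -(cat_take_drop L b) all2_cat; last by rewrite size_ps size_takel // hszb; nlia.
      rewrite minl_le2 // andbT. apply: ps_take => //; last by rewrite hszb; nlia.
      apply: sub_all hbl => x /=; nlia.
  have hnPA : ~ P T (ps j L ++ A) by rewrite -e.
  have := core (Xp := fun x => x \in flat b) (@P_mono S) hstep hgA haA hnPA hgH0
    (minl_le1 hszB) haH0 hXH0 hPH0.
  case=> H' [hgH' hsH' haH' hXH' [hPH' hnPH']].
  have hLk : 1 <= L <= k by apply/andP; split; nlia.
  exists L. split; first exact: hLk.
  apply/(G_char _ hLk hj hSF hTF).
  exists H'. split => //.
  + rewrite hsH'; nlia.
  + have hgc : gs (ps j.+1 L ++ H').
      apply: gs_cat_ps => //; try (apply: sub_all haH' => x /=; nlia).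
    have [_ hub] := P_bound hSF hgc hPH'. rewrite all_cat in hub. case/andP: hub => _ hub.
    apply/allP => x hx. move/allP: haH' => /(_ x hx) hx1. move/allP: hub => /(_ x hx) hx2.
    apply/andP; split; nlia.
  + apply/fsubsetP => x hx.
    have hx1 := fsubsetP hsub1 x hx. have hx2 := fsubsetP hsub2 x hx.
    rewrite mem_pairset e flat_cat mem_cat in hx1. rewrite mem_pairset in hx2.
    rewrite in_fsetU mem_interval mem_pairset.
    case/orP: hx1 => hx1.
    * rewrite mem_flat_ps in hx1. have := flat_lb hbl hx2. move=> h3.
      apply/orP; right. apply/andP; split; nlia.
    * by rewrite (hXH' x hx1 hx2).
- case=> l [hl hG].
  case/(G_char _ hl hj hSF hTF): hG => h [hs hg ha [hP hnP] hsub].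
  case: l hl hs ha hP hnP hsub => [|l'] hl hs ha hP hnP hsub; first by case/andP: hl.
  have hha : forall m, m <= j + 2 * l'.+1 + 1 -> all (fun x => m <= x) h.
    move=> m hm. apply: sub_all ha => x /andP [h1 _]; nlia.
  have hgj : gs (ps j l'.+1 ++ h) by apply: gs_cat_ps => //; apply: hha; nlia.
  have hgj1 : gs (ps j.+1 l'.+1 ++ h) by apply: gs_cat_ps => //; apply: hha; nlia.
  have hPj : P S (ps j l'.+1 ++ h).
    apply: P_mono hP => //. rewrite all2_cat ?size_ps // ps_le. exact: all2_refl.
  have [_ hub1] := P_bound hSF hgj hPj.
  have [_ hub2] := P_bound hSF hgj1 hP.
  move: hub1 hub2. rewrite [ps j _]/= [ps j.+1 _]/= !cat_cons => /andP [_ hub1] /andP [_ hub2].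
  split.
  + apply/(D_char _ hk hj hSF hTF). exists (ps j.+2 l' ++ h). split.
    * rewrite size_cat size_ps hs; nlia.
    * apply: gs_cat_ps => //; apply: hha; nlia.
    * apply/allP => x hx. apply/andP; split; last by move/allP: hub1 => /(_ x hx).
      move: hx; rewrite mem_cat => /orP [hx|hx].
        move/allP: (ps_lb j.+2 l') => /(_ x hx); nlia.
      move/allP: (hha (j + 2) ltac:(nlia)) => /(_ x hx) //.
    * by split.
    * apply/fsubsetP => x hx. move/fsubsetP: hsub => /(_ x hx).
      rewrite in_fsetU mem_interval !mem_pairset.
      change ((x \in flat h) || (j + 1 <= x <= j + 2 * l'.+1 - 1) -> x \in flat (ps j l'.+1 ++ h)).
      rewrite flat_cat mem_cat mem_flat_ps => /orP [->|/andP [h1 h2]]; first by rewrite orbT.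
      apply/orP; left. apply/andP; split; nlia.
  + apply/(D_char _ hk hj1 hSF hTF). rewrite addn1. exists (ps j.+3 l' ++ h). split.
    * rewrite size_cat size_ps hs; nlia.
    * apply: gs_cat_ps => //; apply: hha; nlia.
    * apply/allP => x hx. apply/andP; split; last by move/allP: hub2 => /(_ x hx).
      move: hx; rewrite mem_cat => /orP [hx|hx].
        move/allP: (ps_lb j.+3 l') => /(_ x hx); nlia.
      move/allP: (hha (j.+1 + 2) ltac:(nlia)) => /(_ x hx) //.
    * split; first exact: hP.
      move=> hT. apply: hnP. apply: P_mono hT => //.
      change (all2 leq (ps j l'.+1 ++ h) (ps j.+1 l'.+1 ++ h)).
      rewrite all2_cat ?size_ps // ps_le. exact: all2_refl.
    * apply/fsubsetP => x hx. move/fsubsetP: hsub => /(_ x hx).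
      rewrite in_fsetU mem_interval !mem_pairset.
      change ((x \in flat h) || (j + 1 <= x <= j + 2 * l'.+1 - 1) -> x \in flat (ps j.+1 l'.+1 ++ h)).
      rewrite flat_cat mem_cat mem_flat_ps => /orP [->|/andP [h1 h2]]; first by rewrite orbT.
      apply/orP; left. apply/andP; split; nlia.
Qed.
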